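(* Let $X$ and $Y$ be $T_1$ topological spaces that are peripherally Hausdorff with $\mathrm{rank}_{T_2}(X)=\alpha$ and $\mathrm{rank}_{T_2}(Y)=\beta$. Then $X\times Y$ (with the product topology) is peripherally Hausdorff and $\mathrm{rank}_{T_2}(X\times Y)=\max(\alpha,\beta)$.
   Context: For a topological space $X$ and $x\in X$, let $[x]:=\bigcap\{\overline{U}:U \text{ an open neighbourhood of } x\}$. Define $\alpha$-Hausdorff spaces by transfinite recursion: a space is $0$-Hausdorff if it is Hausdorff; for an ordinal $\alpha>0$, a $T_1$ space $X$ is $\alpha$-Hausdorff if for every $x\in X$ the subspace $[x]$ is $\beta_x$-Hausdorff for some ordinal $\beta_x<\alpha$. A space is peripherally Hausdorff if it is $\alpha$-Hausdorff for some ordinal $\alpha$, and then $\mathrm{rank}_{T_2}(X):=\min\{\alpha: X \text{ is } \alpha\text{-Hausdorff}\}$. *)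

(* Defs.v *)
From HB Require Import structures.
From mathcomp Require Import all_boot all_order.
From mathcomp Require Import all_classical all_reals all_analysis.
Set Implicit Arguments. Unset Strict Implicit. Unset Printing Implicit Defensive.
Local Open Scope classical_set_scope.

(** * Ordinals (Aczel / Brouwer tree ordinals, classically these model the
    ordinals up to the equivalence  a <= b /\ b <= a). *)
Inductive Ord : Type := osup : forall (I : Type), (I -> Ord) -> Ord.

Fixpoint ole (a b : Ord) : Prop :=
  match a, b with
  | @osup Ii f, @osup Jj g => forall i : Ii, exists j : Jj, ole (f i) (g j)
  end.

Definition olt (a b : Ord) : Prop :=
  match b with @osup Jj g => exists j : Jj, ole a (g j) end.

Definition ozero : Ord := osup (fun e : False => match e with end).

Definition omax (a b : Ord) : Ord :=
  match a, b with
  | @osup Ii f, @osup Jj g =>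
      osup (fun k : Ii + Jj => match k with inl i => f i | inr j => g j end)
  end.

(** * Subspace notions, for a subset [A] of a topological space [T]
    carrying the subspace topology. *)
Section Subspace.
Context {T : topologicalType}.

Definition sub_hausdorff (A : set T) : Prop :=
  forall x y, A x -> A y -> x <> y ->
  exists U V : set T, [/\ open U, open V, U x, V y & U `&` V `&` A = set0].

Definition sub_T1 (A : set T) : Prop :=
  forall x y, A x -> A y -> x <> y ->
  exists U : set T, [/\ open U, U x & ~ U y].

(** [x] computed in the subspace A:  the intersection of the closures (in A)
    of all open neighbourhoods (in A) of x.  Open sets of A are U `&` A with U
    open in T, and the closure in A of a set B ⊆ A is closure B `&` A. *)
Definition sub_bracket (A : set T) (x : T) : set T :=
  [set y | A y /\ forall U : set T, open U -> U x -> closure (U `&` A) y].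

Inductive sub_alpha_hausdorff : Ord -> set T -> Prop :=
| SAH0 : forall (a : Ord) (A : set T),
    ole a ozero -> sub_hausdorff A -> sub_alpha_hausdorff a A
| SAHS : forall (a : Ord) (A : set T),
    ~ ole a ozero -> sub_T1 A ->
    (forall x, A x -> exists b, olt b a /\ sub_alpha_hausdorff b (sub_bracket A x)) ->
    sub_alpha_hausdorff a A.

End Subspace.

Definition alpha_hausdorff (T : topologicalType) (a : Ord) : Prop :=
  sub_alpha_hausdorff a [set: T].

Definition peripherally_hausdorff (T : topologicalType) : Prop :=
  exists a, alpha_hausdorff T a.

Definition rankT2_is (T : topologicalType) (a : Ord) : Prop :=
  alpha_hausdorff T a /\ forall b, alpha_hausdorff T b -> ole a b.

(* Main.v *)
Require Import Defs.
From HB Require Import structures.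
From mathcomp Require Import all_boot all_order.
From mathcomp Require Import all_classical all_reals all_analysis.
Set Implicit Arguments. Unset Strict Implicit. Unset Printing Implicit Defensive.
Local Open Scope classical_set_scope.

Lemma ole_refl a : ole a a.
Proof. elim: a => I f IH /= i; exists i; exact: IH. Qed.

Lemma ole_trans a b c : ole a b -> ole b c -> ole a c.
Proof.
elim: a b c => I f IH [J g] [K h] /= H1 H2 i.
have [j Hj] := H1 i; have [k Hk] := H2 j; exists k; exact: IH Hj Hk.
Qed.

Lemma olt_ole a b : olt a b -> ole a b.
Proof.
elim: a b => I f IH [J g] /= [j Hj] i; exists j.
apply: IH; move: Hj; case: (g j) => K m /= H; exact: H.
Qed.

Lemma olt_ole_trans a b c : olt a b -> ole b c -> olt a c.
Proof.
case: b c => J g [K h] /= [j Hj] H; have [k Hk] := H j; exists k.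
exact: ole_trans Hj Hk.
Qed.

Lemma ole_olt_trans a b c : ole a b -> olt b c -> olt a c.
Proof. case: c => K h /= H [k Hk]; exists k; exact: ole_trans H Hk. Qed.

Lemma ole_zero a c : ole a ozero -> ole a c.
Proof. case: a c => I f [K h] /= H i; by have [[]] := H i. Qed.

Lemma ole_omaxl a b : ole a (omax a b).
Proof. case: a b => I f [J g] /= i; exists (inl i); exact: ole_refl. Qed.

Lemma ole_omaxr a b : ole b (omax a b).
Proof. case: a b => I f [J g] /= i; exists (inr i); exact: ole_refl. Qed.

Lemma omax_lub a b c : ole a c -> ole b c -> ole (omax a b) c.
Proof. case: a b c => I f [J g] [K h] /= H1 H2 [i|j]; [exact: H1|exact: H2]. Qed.

Lemma ozero_lt a : ~ ole a ozero -> olt ozero a.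
Proof.
case: a => I f /= H.
have [i _] : exists i : I, True.
  apply: contrapT => N; apply: H => i; exfalso; apply: N; by exists i.
exists i; case: (f i) => K h /= [].
Qed.

Lemma ole_total a b : ole a b \/ olt b a.
Proof.
elim: a b => I f IH [J g].
have [H|H] := pselect (ole (osup f) (osup g)); first by left.
right; move: H => /= /existsNP [i Hi]; exists i.
case E: (f i) => [K h] /= j.
have := IH i (g j); rewrite E; case=> // H; exfalso; apply: Hi; exists j; by rewrite E.
Qed.

Lemma olt_omax a b a' b' : olt a' a -> olt b' b -> olt (omax a' b') (omax a b).
Proof.
move=> Ha Hb; have [H|H] := ole_total a' b'.
  apply: (ole_olt_trans (b := b')); first exact: omax_lub (ole_refl _).
  exact: olt_ole_trans Hb (ole_omaxr _ _).
apply: (ole_olt_trans (b := a')); first exact: omax_lub (ole_refl _) (olt_ole H).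
exact: olt_ole_trans Ha (ole_omaxl _ _).
Qed.

Lemma olt_omax0l a b b' : ole a ozero -> olt b' b -> olt (omax a b') (omax a b).
Proof.
move=> Ha Hb; apply: (ole_olt_trans (b := b')); first exact: omax_lub (ole_zero _ Ha) (ole_refl _).
exact: olt_ole_trans Hb (ole_omaxr _ _).
Qed.

Lemma olt_omax0r a b a' : ole b ozero -> olt a' a -> olt (omax a' b) (omax a b).
Proof.
move=> Hb Ha; apply: (ole_olt_trans (b := a')); first exact: omax_lub (ole_refl _) (ole_zero _ Hb).
exact: olt_ole_trans Ha (ole_omaxl _ _).
Qed.

Section Ind.
Context {T : topologicalType}.
Variable P : Ord -> set T -> Prop.
Hypothesis H0 : forall a A, ole a ozero -> sub_hausdorff A -> P a A.
Hypothesis HS : forall a A, ~ ole a ozero -> sub_T1 A ->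
  (forall x, A x -> exists b, [/\ olt b a, sub_alpha_hausdorff b (sub_bracket A x)
      & P b (sub_bracket A x)]) -> P a A.

Fixpoint sah_ind' a A (d : sub_alpha_hausdorff a A) {struct d} : P a A :=
  match d with
  | SAH0 a A h1 h2 => H0 h1 h2
  | SAHS a A h1 h2 h3 => HS h1 h2 (fun x Ax =>
      match h3 x Ax with
      | ex_intro b (conj hb hd) => ex_intro _ b (And3 hb hd (sah_ind' hd))
      end)
  end.
End Ind.

Section Basic.
Context {T : topologicalType}.
Implicit Types A B : set T.

Lemma haus_T1 A : sub_hausdorff A -> sub_T1 A.
Proof.
move=> H x y Ax Ay xy; have [U [V [oU oV Ux Vy E]]] := H x y Ax Ay xy.
exists U; split=> // Uy; have : (U `&` V `&` A) y by [].
by rewrite E.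
Qed.

Lemma haus_sub A B : B `<=` A -> sub_hausdorff A -> sub_hausdorff B.
Proof.
move=> BA H x y Bx By xy; have [U [V [oU oV Ux Vy E]]] := H x y (BA _ Bx) (BA _ By) xy.
exists U, V; split=> //; apply/seteqP; split=> // z [[Uz Vz] Bz].
have : (U `&` V `&` A) z by split=> //; apply: BA.
by rewrite E.
Qed.

Lemma T1_sub A B : B `<=` A -> sub_T1 A -> sub_T1 B.
Proof. move=> BA H x y Bx By; exact: H (BA _ Bx) (BA _ By). Qed.

Lemma bracket_sub A B x : B `<=` A -> sub_bracket B x `<=` sub_bracket A x.
Proof.
move=> BA y [By H]; split; first exact: BA.
move=> U oU Ux; apply: closure_subset (H U oU Ux); exact: setIS.
Qed.

Lemma bracket_haus A x : A x -> sub_hausdorff A -> sub_bracket A x `<=` [set x].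
Proof.
move=> Ax H y [Ay By]; apply: contrapT => yx.
have [U [V [oU oV Ux Vy E]]] := H x y Ax Ay (nesym yx).
have [z [[Uz Az] Vz]] := By U oU Ux V (open_nbhs_nbhs (conj oV Vy)).
have : (U `&` V `&` A) z by [].
by rewrite E.
Qed.

Lemma bracket_self A x : A x -> sub_bracket A x x.
Proof. move=> Ax; split=> // U oU Ux; exact: subset_closure. Qed.

End Basic.

Section Her.
Context {T : topologicalType}.
Implicit Types A B : set T.

Lemma bracket_subA A x : sub_bracket A x `<=` A.
Proof. by move=> y []. Qed.

Lemma sah_sub a A : sub_alpha_hausdorff a A -> forall B, B `<=` A -> sub_alpha_hausdorff a B.
Proof.
move: a A; apply: sah_ind'.
  move=> a A a0 H B BA; apply: SAH0 => //; exact: haus_sub H.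
move=> a A a0 T1 IH B BA; apply: SAHS => //; first exact: T1_sub T1.
move=> x Bx; have [b [ba _ Hb]] := IH x (BA _ Bx).
exists b; split=> //; apply: Hb; exact: bracket_sub.
Qed.

Lemma sah_mono a A : sub_alpha_hausdorff a A -> forall c, ole a c -> sub_alpha_hausdorff c A.
Proof.
move: a A; apply: sah_ind'.
  move=> a A a0 H c ac; have [c0|c0] := pselect (ole c ozero); first exact: SAH0.
  apply: SAHS => //; first exact: haus_T1.
  move=> x Ax; exists ozero; split; first exact: ozero_lt.
  apply: SAH0; first exact: ole_refl.
  exact: haus_sub (@bracket_subA A x) H.
move=> a A a0 T1 IH c ac; apply: SAHS => //.
  by move=> c0; apply: a0; exact: ole_trans ac c0.
move=> x Ax; have [b [ba Hb _]] := IH x Ax; exists b; split=> //.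
exact: olt_ole_trans ba ac.
Qed.
End Her.

Section Prod.
Context {X Y : topologicalType}.

Lemma nbhs_prod (x : X) (y : Y) P Q : nbhs x P -> nbhs y Q -> nbhs (x, y) (P `*` Q).
Proof. move=> HP HQ; exists (P, Q) => //. Qed.

Lemma open_prod_nbhs (W : set (X * Y)) x y : open W -> W (x, y) ->
  exists P Q, [/\ nbhs x P, nbhs y Q & P `*` Q `<=` W].
Proof.
rewrite openE => oW Wxy; have := oW _ Wxy; rewrite /interior.
move=> [[P Q] [/= HP HQ] sub]; by exists P, Q.
Qed.

Lemma open_XT (U : set X) : open U -> open (U `*` [set: Y]).
Proof.
move=> oU; rewrite openE => -[x y] [Ux _]; rewrite /interior.
apply: nbhs_prod; [exact: open_nbhs_nbhs | exact: filterT].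
Qed.

Lemma open_TX (V : set Y) : open V -> open ([set: X] `*` V).
Proof.
move=> oV; rewrite openE => -[x y] [_ Vy]; rewrite /interior.
apply: nbhs_prod; [exact: filterT | exact: open_nbhs_nbhs].
Qed.

Lemma T1_prod (A : set X) (B : set Y) : sub_T1 A -> sub_T1 B -> sub_T1 (A `*` B).
Proof.
move=> HA HB [x1 y1] [x2 y2] [/= A1 B1] [/= A2 B2] ne.
have [ex|nx] := pselect (x1 = x2).
  have ny : y1 <> y2 by move=> ey; apply: ne; rewrite ex ey.
  have [V [oV V1 V2]] := HB _ _ B1 B2 ny.
  exists ([set: X] `*` V); split => //; [exact: open_TX| by move=> [] ].
have [U [oU U1 U2]] := HA _ _ A1 A2 nx.
exists (U `*` [set: Y]); split => //; [exact: open_XT| by move=> [] ].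
Qed.

Lemma haus_prod (A : set X) (B : set Y) : sub_hausdorff A -> sub_hausdorff B ->
  sub_hausdorff (A `*` B).
Proof.
move=> HA HB [x1 y1] [x2 y2] [/= A1 B1] [/= A2 B2] ne.
have [ex|nx] := pselect (x1 = x2).
  have ny : y1 <> y2 by move=> ey; apply: ne; rewrite ex ey.
  have [U [V [oU oV U1 V2 E]]] := HB _ _ B1 B2 ny.
  exists ([set: X] `*` U), ([set: X] `*` V); split => //; [exact: open_TX|exact: open_TX|].
  apply/seteqP; split=> // -[z w] [[[_ Uw] [_ Vw]] [Az Bw]].
  have : (U `&` V `&` B) w by []. by rewrite E.
have [U [V [oU oV U1 V2 E]]] := HA _ _ A1 A2 nx.
exists (U `*` [set: Y]), (V `*` [set: Y]); split => //; [exact: open_XT|exact: open_XT|].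
apply/seteqP; split=> // -[z w] [[[Uz _] [Vz _]] [Az Bw]].
have : (U `&` V `&` A) z by []. by rewrite E.
Qed.

Lemma bracket_prod (A : set X) (B : set Y) p :
  sub_bracket (A `*` B) p `<=` sub_bracket A p.1 `*` sub_bracket B p.2.
Proof.
case: p => x y [x' y'] [[/= Ax' By'] H]; split; split => //=.
  move=> U oU Ux N HN.
  have [[z w] [[[Uz _] [Az Bw]] [Nz _]]] :=
    H (U `*` [set: Y]) (open_XT oU) (conj Ux I) (N `*` [set: Y]) (nbhs_prod HN filterT).
  by exists z.
move=> V oV Vy N HN.
have [[z w] [[[_ Vw] [Az Bw]] [_ Nw]]] :=
  H ([set: X] `*` V) (open_TX oV) (conj I Vy) ([set: X] `*` N) (nbhs_prod filterT HN).
by exists w.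
Qed.
End Prod.

Section Main.
Context {X Y : topologicalType}.

Lemma sah_prod a (A : set X) : sub_alpha_hausdorff a A ->
  forall b (B : set Y), sub_alpha_hausdorff b B ->
  sub_alpha_hausdorff (omax a b) (A `*` B).
Proof.
move: a A; apply: sah_ind'.
  move=> a A a0 HA; apply: sah_ind'.
    move=> b B b0 HB; apply: SAH0; [exact: omax_lub| exact: haus_prod].
  move=> b B b0 T1B IH; apply: SAHS.
  - by move=> c0; apply: b0; apply: ole_trans (ole_omaxr a b) c0.
  - exact: T1_prod (haus_T1 HA) T1B.
  - move=> [x y] [/= Ax By]; have [b' [bb _ Hb']] := IH y By.
    exists (omax a b'); split; first exact: olt_omax0l.
    apply: (sah_sub Hb') => z /bracket_prod [/= /bracket_subA H1 H2]; by split.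
move=> a A a0 T1A IH b B dB; case: dB.
  move=> {}b {}B b0 HB; apply: SAHS.
  - by move=> c0; apply: a0; apply: ole_trans (ole_omaxl a b) c0.
  - exact: T1_prod T1A (haus_T1 HB).
  - move=> [x y] [/= Ax By]; have [a' [aa _ Ha']] := IH x Ax.
    exists (omax a' b); split; first exact: olt_omax0r.
    apply: (sah_sub (Ha' _ _ (SAH0 b0 HB))) => z /bracket_prod [/= H1 /bracket_subA H2]; by split.
move=> {}b {}B b0 T1B HB; apply: SAHS.
- by move=> c0; apply: a0; apply: ole_trans (ole_omaxl a b) c0.
- exact: T1_prod T1A T1B.
- move=> [x y] [/= Ax By]; have [a' [aa _ Ha']] := IH x Ax.
  have [b' [bb Hb']] := HB y By.
  exists (omax a' b'); split; first exact: olt_omax.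
  apply: (sah_sub (Ha' _ _ Hb')); exact: bracket_prod.
Qed.
End Main.

Section Slice.
Context {X Y : topologicalType}.

Lemma open_secl (W : set (X * Y)) y0 : open W -> open [set x | W (x, y0)].
Proof.
move=> oW; rewrite openE => x /= Wx; rewrite /interior.
have [P [Q [HP HQ sub]]] := open_prod_nbhs oW Wx.
apply: filterS HP => z Pz; apply: sub; split => //; exact: nbhs_singleton.
Qed.

Lemma open_secr (W : set (X * Y)) x0 : open W -> open [set y | W (x0, y)].
Proof.
move=> oW; rewrite openE => y /= Wy; rewrite /interior.
have [P [Q [HP HQ sub]]] := open_prod_nbhs oW Wy.
apply: filterS HQ => z Qz; apply: sub; split => //; exact: nbhs_singleton.
Qed.

Lemma slice_l (y0 : Y) c (S : set (X * Y)) : sub_alpha_hausdorff c S ->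
  forall A : set X, A `*` [set y0] `<=` S -> sub_alpha_hausdorff c A.
Proof.
move: c S; apply: sah_ind'.
  move=> c S c0 HS A AS; apply: SAH0 => // x1 x2 A1 A2 ne.
  have ne' : (x1, y0) <> (x2, y0) by case.
  have [U [V [oU oV U1 V2 E]]] := HS _ _ (AS (x1, y0) (conj A1 erefl)) (AS (x2, y0) (conj A2 erefl)) ne'.
  exists [set x | U (x, y0)], [set x | V (x, y0)]; split => //; try exact: open_secl.
  apply/seteqP; split => // z [[/= Uz Vz] Az].
  have : (U `&` V `&` S) (z, y0) by split => //; apply: AS.
  by rewrite E.
move=> c S c0 T1S IH A AS; apply: SAHS => //.
  move=> x1 x2 A1 A2 ne; have ne' : (x1, y0) <> (x2, y0) by case.
  have [U [oU U1 U2]] := T1S _ _ (AS (x1, y0) (conj A1 erefl)) (AS (x2, y0) (conj A2 erefl)) ne'.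
  exists [set x | U (x, y0)]; split => //; exact: open_secl.
move=> x Ax; have [c' [cc _ Hc']] := IH (x, y0) (AS (x, y0) (conj Ax erefl)).
exists c'; split => //; apply: Hc' => -[x' y'] [[/= Ax' Hx'] /= ->].
split; first exact: AS.
move=> W oW Wx N [[P' Q'] [/= HP' HQ'] subN].
have [P [Q [HP HQ sub]]] := open_prod_nbhs oW Wx.
have [z [[Pz Az] P'z]] := Hx' _ (@open_interior _ P) HP P' HP'.
exists (z, y0); split; last by apply: subN; split => //; exact: nbhs_singleton.
split; last by apply: AS.
apply: sub; split; [exact: interior_subset | exact: nbhs_singleton].
Qed.

Lemma slice_r (x0 : X) c (S : set (X * Y)) : sub_alpha_hausdorff c S ->
  forall B : set Y, [set x0] `*` B `<=` S -> sub_alpha_hausdorff c B.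
Proof.
move: c S; apply: sah_ind'.
  move=> c S c0 HS A AS; apply: SAH0 => // x1 x2 A1 A2 ne.
  have ne' : (x0, x1) <> (x0, x2) by case.
  have [U [V [oU oV U1 V2 E]]] := HS _ _ (AS (x0, x1) (conj erefl A1)) (AS (x0, x2) (conj erefl A2)) ne'.
  exists [set x | U (x0, x)], [set x | V (x0, x)]; split => //; try exact: open_secr.
  apply/seteqP; split => // z [[/= Uz Vz] Az].
  have : (U `&` V `&` S) (x0, z) by split => //; apply: AS.
  by rewrite E.
move=> c S c0 T1S IH A AS; apply: SAHS => //.
  move=> x1 x2 A1 A2 ne; have ne' : (x0, x1) <> (x0, x2) by case.
  have [U [oU U1 U2]] := T1S _ _ (AS (x0, x1) (conj erefl A1)) (AS (x0, x2) (conj erefl A2)) ne'.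
  exists [set x | U (x0, x)]; split => //; exact: open_secr.
move=> x Ax; have [c' [cc _ Hc']] := IH (x0, x) (AS (x0, x) (conj erefl Ax)).
exists c'; split => //; apply: Hc' => -[x' y'] [/= -> [/= Ay' Hy']].
split; first exact: AS.
move=> W oW Wx N [[P' Q'] [/= HP' HQ'] subN].
have [P [Q [HP HQ sub]]] := open_prod_nbhs oW Wx.
have [z [[Qz Az] Q'z]] := Hy' _ (@open_interior _ Q) HQ Q' HQ'.
exists (x0, z); split; last by apply: subN; split => //; exact: nbhs_singleton.
split; last by apply: AS.
apply: sub; split; [exact: nbhs_singleton | exact: interior_subset].
Qed.
End Slice.

Theorem theorem19 (X Y : topologicalType) (a b : Ord)
  (neX : inhabited X) (neY : inhabited Y)
  (T1X : @accessible_space X) (T1Y : @accessible_space Y)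
  (rX : rankT2_is X a) (rY : rankT2_is Y b) :
  peripherally_hausdorff (X * Y)%type /\ rankT2_is (X * Y)%type (omax a b).
Proof.
case: rX => HX minX; case: rY => HY minY; case: neX => x0; case: neY => y0.
have H : alpha_hausdorff (X * Y)%type (omax a b).
  rewrite /alpha_hausdorff; apply: (sah_sub (sah_prod HX HY)); by [].
split; first by exists (omax a b).
split => // c Hc; apply: omax_lub.
  apply: minX; apply: (slice_l (y0 := y0) Hc); by [].
apply: minY; apply: (slice_r (x0 := x0) Hc); by [].
Qed.
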